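(* Let $\rho,\lambda,\kappa$ be nonnegative integers with $P(\lambda+\kappa+1)\le\rho\le\frac34\lambda$. Let $\mathcal B$ be the set of integers $0\le l<q^\lambda$ for which there exist integers $0\le k_1,k_2<q^\kappa$ with $$a_P(lq^\kappa+k_1+k_2)-a_P(lq^\kappa+k_1)\ne a_P^{(\kappa+\rho)}(lq^\kappa+k_1+k_2)-a_P^{(\kappa+\rho)}(lq^\kappa+k_1).$$ Then $\#\mathcal B\ll q^{\lambda-\rho+P(\lambda+\kappa+1)}$.
   Context: Fix an integer $q\ge2$. For an integer $n\ge0$, $\varepsilon_i(n)$ is the $i$-th digit of $n$ in base $q$ ($\varepsilon_0$ the units digit). For real $x>0$, $T_q(x)=\lfloor\log x/\log q\rfloor$. $P:\mathbb{N}\to\mathbb{N}$ is a nondecreasing integer-valued function. For integers $x,y\ge0$, $a_P(x,y)=\sum_{i\ge0}\varepsilon_{i+P(y)}(x)\cdots\varepsilon_i(x)$ and $a_P(n)=a_P(n,T_q(n))$. For an integer $\rho\ge0$ and integer $n\ge1$, $a_P^{(\rho)}(n)=a_P(n\bmod q^\rho,T_q(n))$ (note: the block length is determined by $T_q(n)$, not by $T_q(n\bmod q^\rho)$). The implied constant depends at most on $q$. *)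

(* Defs.v *)
From mathcomp Require Import all_boot all_order all_algebra.
Set Implicit Arguments. Unset Strict Implicit. Unset Printing Implicit Defensive.

Definition digit (q i n : nat) : nat := (n %/ q ^ i) %% q.

(* T_q(x) = floor(log x / log q) for x >= 1; trunc_log q 0 = 0 (irrelevant) *)
Definition Tq (q x : nat) : nat := trunc_log q x.

(* a_P(x,y) = sum_{i>=0} eps_{i+P(y)}(x) ... eps_i(x).
   Terms with i >= x vanish (q^i > x), so summing over i < x.+1 is the full sum. *)
Definition aP2 (q : nat) (P : nat -> nat) (x y : nat) : nat :=
  \sum_(i < x.+1) \prod_(j < (P y).+1) digit q (i + j) x.

Definition aP (q : nat) (P : nat -> nat) (n : nat) : nat := aP2 q P n (Tq q n).

Definition aPrho (q : nat) (P : nat -> nat) (rho n : nat) : nat :=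
  aP2 q P (n %% q ^ rho) (Tq q n).

(* Main.v *)
Require Import Defs.
From mathcomp Require Import all_boot all_order all_algebra.
From mathcomp Require Import zify.
Import GRing.Theory Num.Theory.

Definition W (q : nat) (p x i : nat) : nat := \prod_(j < p.+1) digit q (i + j) x.

Lemma digit_big q k x : 1 < q -> x < k -> digit q k x = 0.
Proof.
move=> hq hx; rewrite /digit divn_small ?mod0n //.
by apply: (leq_trans hx); apply: ltnW; apply: ltn_expl.
Qed.

Lemma W_big q p x i : 1 < q -> x < i -> W q p x i = 0.
Proof. by move=> hq hx; rewrite /W big_ord_recl addn0 digit_big // mul0n. Qed.

Lemma aP2_ext q P x y N : 1 < q -> x < N ->
  aP2 q P x y = \sum_(i < N) W q (P y) x i.
Proof.
move=> hq hN; rewrite /aP2 -/(W q (P y) x _) (big_ord_widen _ (fun i => W q (P y) x i) hN) big_mkcond /=.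
apply: eq_bigr => i _; case: ifP => // /negbT; rewrite -leqNgt => h.
by rewrite W_big.
Qed.

Lemma digit_mod q k m x : 1 < q -> k < m -> digit q k (x %% q ^ m) = digit q k x.
Proof.
move=> hq hk; rewrite /digit.
have -> : q ^ m = q ^ (m - k) * q ^ k by rewrite -expnD subnK // ltnW.
rewrite -modn_divl modn_dvdm //.
by rewrite -(subnSK hk) expnS dvdn_mulr.
Qed.

Lemma digit_mod0 q k m x : 1 < q -> m <= k -> digit q k (x %% q ^ m) = 0.
Proof.
move=> hq hk; rewrite /digit divn_small ?mod0n //.
apply: (leq_trans (ltn_pmod _ _)); first by rewrite expn_gt0 ltnW.
by rewrite leq_pexp2l // ltnW.
Qed.

Lemma digit_div q k c x x' : 1 < q -> c <= k -> x %/ q ^ c = x' %/ q ^ c ->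
  digit q k x = digit q k x'.
Proof.
move=> hq hk e; rewrite /digit.
have -> : q ^ k = q ^ c * q ^ (k - c) by rewrite -expnD subnKC.
by rewrite !divnMA e.
Qed.

Lemma aP2_split q P x y m N : 1 < q -> x < N ->
  aP2 q P x y = aP2 q P (x %% q ^ m) y + \sum_(i < N | m <= i + P y) W q (P y) x i.
Proof.
move=> hq hN.
rewrite (aP2_ext _ P _ y _ hq hN) (aP2_ext _ P _ y _ hq (leq_ltn_trans (leq_mod _ _) hN)).
rewrite (bigID (fun i : 'I_N => m <= i + P y)) /=.
rewrite [X in _ = X + _](bigID (fun i : 'I_N => m <= i + P y)) /=.
have -> : \sum_(i < N | m <= i + P y) W q (P y) (x %% q ^ m) i = 0.
  apply: big1 => i hi; rewrite /W (bigD1 ord_max) //= digit_mod0 //.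
have -> : \sum_(i < N | ~~ (m <= i + P y)) W q (P y) (x %% q ^ m) i =
          \sum_(i < N | ~~ (m <= i + P y)) W q (P y) x i.
  apply: eq_bigr => i; rewrite -ltnNge => hi.
  apply: eq_bigr => j _; rewrite digit_mod //.
  apply: (leq_ltn_trans _ hi); rewrite leq_add2l; have := ltn_ord j; by [].
by rewrite add0n addnC.
Qed.

Lemma core q P m c n n' : 1 < q -> n' <= n -> c <= m -> n %/ q ^ c = n' %/ q ^ c ->
  c + P (Tq q n) <= m ->
  ((aP q P n)%:Z - (aP q P n')%:Z = (aPrho q P m n)%:Z - (aPrho q P m n')%:Z)%R.
Proof.
move=> hq hn hcm e hP.
have qc0 : 0 < q ^ c by rewrite expn_gt0 ltnW.
have hcm' : q ^ c <= q ^ m by rewrite leq_pexp2l // ltnW.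
case: (posnP (n %/ q ^ c)) => [L0|Lp].
  have hn1 : n < q ^ c by rewrite ltnNge -(mul1n (q ^ c)) -leq_divRL // L0.
  have hn2 : n' < q ^ c by apply: leq_ltn_trans hn hn1.
  rewrite /aPrho (modn_small (leq_trans hn1 hcm')) (modn_small (leq_trans hn2 hcm')).
  by [].
set t := Tq q n.
have qcn : q ^ c <= n by rewrite -(mul1n (q ^ c)) -leq_divRL.
have ct : c <= t by apply: trunc_log_max.
have ht : Tq q n' = t.
  apply: trunc_log_eq => //; apply/andP; split; last first.
    by apply: leq_ltn_trans hn _; apply: trunc_log_ltn.
  have h1 : q ^ t <= n by apply: trunc_logP => //; apply: leq_trans qcn; rewrite expn_gt0 ltnW.
  have : q ^ (t - c) <= n' %/ q ^ c by rewrite -e leq_divRL // -expnD subnK.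
  rewrite leq_divRL // -expnD subnK //.
rewrite /aPrho /aP ht -/t.
rewrite (aP2_split q P n t m n.+1 hq (ltnSn n)) (aP2_split q P n' t m n.+1 hq hn).
rewrite !PoszD.
have -> : \sum_(i < n.+1 | m <= i + P t) W q (P t) n i = \sum_(i < n.+1 | m <= i + P t) W q (P t) n' i.
  apply: eq_bigr => i hi; apply: eq_bigr => j _; apply: (digit_div _ _ _ _ _ hq _ e).
  apply: leq_trans (leq_addr _ _); rewrite -(leq_add2r (P t)); exact: leq_trans hP hi.
rewrite GRing.opprD GRing.addrACA GRing.subrr GRing.addr0 //.
Qed.

Lemma divlem q s kap l k : 1 < q -> k < 2 * q ^ kap -> l %% q ^ s != q ^ s - 1 ->
  (l * q ^ kap + k) %/ q ^ (kap + s) = l %/ q ^ s.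
Proof.
move=> hq hk hl.
have K0 : 0 < q ^ kap by rewrite expn_gt0 ltnW.
have Q0 : 0 < q ^ s by rewrite expn_gt0 ltnW.
rewrite expnD.
have hr : l %% q ^ s < q ^ s by rewrite ltn_pmod.
have hr2 : l %% q ^ s + 2 <= q ^ s by move: hl hr; set r := l %% q ^ s; lia.
have -> : l * q ^ kap + k = l %/ q ^ s * (q ^ kap * q ^ s) + (l %% q ^ s * q ^ kap + k).
  rewrite {1}(divn_eq l (q ^ s)); move: (l %/ q ^ s) (l %% q ^ s) (q ^ s) (q ^ kap) => a b Q K; lia.
rewrite divnMDl ?muln_gt0 ?K0 // [X in _ + X = _]divn_small ?addn0 //.
move: hr2 hk K0; set r := l %% q ^ s; set K := q ^ kap; set Q := q ^ s => *.
nia.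

Qed.

Lemma count_bound q lam s : 1 < q -> s <= lam ->
  #|[set l : 'I_(q ^ lam) | l %% q ^ s == q ^ s - 1]| <= q ^ (lam - s).
Proof.
move=> hq hs.
have Q0 : 0 < q ^ s by rewrite expn_gt0 ltnW.
set A := [set l : 'I_(q ^ lam) | _].
rewrite -(size_image (fun l : 'I_(q ^ lam) => val l %/ q ^ s) A).
rewrite -(size_iota 0 (q ^ (lam - s))).
apply: uniq_leq_size.
  rewrite map_inj_in_uniq ?enum_uniq //.
  move=> l1 l2; rewrite !mem_enum !inE => /eqP h1 /eqP h2 e.
  apply: val_inj; rewrite /= (divn_eq l1 (q ^ s)) (divn_eq l2 (q ^ s)) e h1 h2 //.
move=> x /imageP [l _ ->]; rewrite mem_iota add0n /= ltn_divLR // -expnD subnK //.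
Qed.

Theorem mainTheorem3 (q : nat) (hq : 1 < q) :
  exists C : nat,
    forall (P : nat -> nat), {homo P : m n / (m <= n)%N} ->
    forall rho lam kap : nat,
      (P (lam + kap + 1) <= rho)%N -> (4 * rho <= 3 * lam)%N ->
      (#|[set l : 'I_(q ^ lam) |
          [exists k1 : 'I_(q ^ kap), exists k2 : 'I_(q ^ kap),
             ((aP q P (l * q ^ kap + k1 + k2))%:Z - (aP q P (l * q ^ kap + k1))%:Z
              != (aPrho q P (kap + rho) (l * q ^ kap + k1 + k2))%:Z
                 - (aPrho q P (kap + rho) (l * q ^ kap + k1))%:Z)%R]]|
       <= C * q ^ (lam - rho + P (lam + kap + 1)))%N.
Proof.
exists 1 => P hP rho lam kap h1 h2.
rewrite mul1n.
set P0 := P (lam + kap + 1) in h1 *.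
set s := rho - P0.
have hs : s <= lam by rewrite /s; lia.
have -> : lam - rho + P0 = lam - s by rewrite /s; lia.
apply: leq_trans (count_bound _ _ _ hq hs).
apply: subset_leq_card; apply/subsetP => l; rewrite !inE; apply: contraTT => hl.
apply/existsPn => k1; apply/existsPn => k2; rewrite negbK; apply/eqP.
have K0 : 0 < q ^ kap by rewrite expn_gt0 ltnW.
have hk1 := ltn_ord k1; have hk2 := ltn_ord k2; have hl0 := ltn_ord l.
apply: (core _ _ _ (kap + s) _ _ hq).
- by rewrite leq_addr.
- by rewrite leq_add2l /s leq_subr.
- rewrite -addnA !divlem //; move: hk1 hk2; lia.
- have hT : Tq q (l * q ^ kap + k1 + k2) <= lam + kap + 1.
    rewrite -[X in _ <= X](trunc_expnK (lam + kap + 1) hq); apply: leq_trunc_log.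
    have Qge : 1 <= q ^ lam by rewrite expn_gt0 ltnW.
    rewrite !expnD expn1.
    have a1 : l.+1 * q ^ kap <= q ^ lam * q ^ kap by rewrite leq_mul2r hl0 orbT.
    have a2 : q ^ lam * q ^ kap * 2 <= q ^ lam * q ^ kap * q by rewrite leq_mul2l hq orbT.
    have a3 : q ^ kap <= q ^ lam * q ^ kap by rewrite leq_pmull.
    move: hk1 hk2 a1 a2 a3; rewrite mulSn; set K := q ^ kap; set Q := q ^ lam; set LK := l * K; set QK := Q * K => *.
    lia.
  have := hP _ _ hT; rewrite -/P0 /s; lia.
Qed.
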